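(* Let $\Gamma$ be a finite undirected simple graph with vertex set $\{x_1,\dots,x_n\}$ whose maximal vertex degree equals $n-2$ and such that exactly one vertex has degree $n-2$. Then the associated group $G_\Gamma$ has the $R_\infty$-property.
   Context: For a finite undirected simple graph $\Gamma$ with vertex set $\{x_1,\dots,x_n\}$ and edge set $E$, the group $G_\Gamma$ is defined by the presentation with generators $x_1,\dots,x_n$ and $y_{i,j}$ for each pair $i<j$ with $x_ix_j\notin E$, and relations $[x_j,x_i]=1$ if $x_ix_j\in E$; $[x_j,x_i]=y_{i,j}$ if $x_ix_j\notin E$ and $i<j$; and $[x_l,y_{i,j}]=1$ for all $l$ and all such $y_{i,j}$. For a group $G$ and $\varphi\in\mathrm{Aut}(G)$, elements $a,b$ are $\varphi$-conjugate if $a=cb\varphi(c)^{-1}$ for some $c\in G$; the number $R(\varphi)\in\mathbb{N}_0\cup\{\infty\}$ of equivalence classes is the Reidemeister number. The Reidemeister spectrum is $\mathrm{Spec}_R(G)=\{R(\varphi):\varphi\in\mathrm{Aut}(G)\}$, and $G$ has the $R_\infty$-property if $\mathrm{Spec}_R(G)=\{\infty\}$. Here $\mathbb{N}_0$ denotes the positive integers. *)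

(* Defs.v *)
From Stdlib Require Import List.
From mathcomp Require Import all_boot.
Set Implicit Arguments. Unset Strict Implicit. Unset Printing Implicit Defensive.

Record group := Group {
  gcar :> Type;
  gmul : gcar -> gcar -> gcar;
  gone : gcar;
  ginv : gcar -> gcar;
  gmulA : forall a b c, gmul a (gmul b c) = gmul (gmul a b) c;
  gmul1l : forall a, gmul gone a = a;
  gmulVl : forall a, gmul (ginv a) a = gone
}.

Definition is_hom (G H : group) (f : G -> H) : Prop :=
  forall a b : G, f (gmul a b) = gmul (f a) (f b).

Definition is_aut (G : group) (phi : G -> G) : Prop :=
  is_hom phi /\ bijective phi.

Definition comm (G : group) (a b : G) : G :=
  gmul (gmul (gmul (ginv a) (ginv b)) a) b.

Definition simple_graph (n : nat) (e : rel 'I_n) : Prop :=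
  (forall i j, e i j = e j i) /\ (forall i, ~~ e i i).

Definition deg (n : nat) (e : rel 'I_n) (i : 'I_n) : nat := #|[set j | e i j]|.

(* the defining relations of G_Gamma, for candidate images x_i, y_{i,j}
   (y i j is only relevant for i < j with x_i x_j not an edge) *)
Definition GammaRel (n : nat) (e : rel 'I_n) (H : group)
    (x : 'I_n -> H) (y : 'I_n -> 'I_n -> H) : Prop :=
  (forall i j : 'I_n, i < j -> e i j -> comm (x j) (x i) = gone H) /\
  (forall i j : 'I_n, i < j -> ~~ e i j -> comm (x j) (x i) = y i j) /\
  (forall l i j : 'I_n, i < j -> ~~ e i j -> comm (x l) (y i j) = gone H).

(* (G, x, y) is a presentation of G_Gamma: the relations hold and
   the universal property of the presented group holds *)
Definition presents_GGamma (n : nat) (e : rel 'I_n) (G : group)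
    (x : 'I_n -> G) (y : 'I_n -> 'I_n -> G) : Prop :=
  GammaRel e x y /\
  forall (H : group) (xh : 'I_n -> H) (yh : 'I_n -> 'I_n -> H),
    GammaRel e xh yh ->
    exists f : G -> H,
      [/\ is_hom f,
          (forall i, f (x i) = xh i),
          (forall i j : 'I_n, i < j -> ~~ e i j -> f (y i j) = yh i j) &
          (forall g : G -> H, is_hom g ->
             (forall i, g (x i) = xh i) ->
             (forall i j : 'I_n, i < j -> ~~ e i j -> g (y i j) = yh i j) ->
             forall a, g a = f a)].

Definition twisted_conj (G : group) (phi : G -> G) (a b : G) : Prop :=
  exists c : G, a = gmul (gmul c b) (ginv (phi c)).

Definition reidemeister_infinite (G : group) (phi : G -> G) : Prop :=
  forall s : seq G, exists a : G, forall b, List.In b s -> ~ twisted_conj phi a b.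

Definition R_infty_property (G : group) : Prop :=
  forall phi : G -> G, is_aut phi -> reidemeister_infinite phi.

(* Main.v *)
Require Import Defs.
From mathcomp Require Import all_boot.
From mathcomp Require Import all_algebra.
From mathcomp Require Import ring zify.
From Stdlib Require Import ClassicalEpsilon Classical.
Set Implicit Arguments. Unset Strict Implicit. Unset Printing Implicit Defensive.
Import GRing.Theory.

Section GroupLemmas.
Variable G : group.
Local Notation "a * b" := (gmul a b).
Local Notation "1" := (gone G).

Lemma idem1 (a : G) : a * a = a -> a = 1.
Proof. move=> h. by rewrite -(gmul1l a) -(gmulVl a) -gmulA h. Qed.

Lemma gmulVr (a : G) : a * ginv a = 1.
Proof.
apply: idem1. by rewrite -gmulA (gmulA (ginv a) a) gmulVl gmul1l.
Qed.

Lemma gmul1r (a : G) : a * 1 = a.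
Proof. by rewrite -(gmulVl a) gmulA gmulVr gmul1l. Qed.

Lemma inv_uniq (a b : G) : b * a = 1 -> b = ginv a.
Proof. move=> h. by rewrite -(gmul1r b) -(gmulVr a) gmulA h gmul1l. Qed.

Lemma ginvK (a : G) : ginv (ginv a) = a.
Proof. by symmetry; apply: inv_uniq; rewrite gmulVr. Qed.

Lemma ginvM (a b : G) : ginv (a * b) = ginv b * ginv a.
Proof.
symmetry; apply: inv_uniq.
by rewrite -gmulA (gmulA (ginv a)) gmulVl gmul1l gmulVl.
Qed.

Lemma ginv1 : ginv 1 = 1.
Proof. by symmetry; apply: inv_uniq; rewrite gmul1l. Qed.

Lemma gmulKl (a b : G) : ginv a * (a * b) = b.
Proof. by rewrite gmulA gmulVl gmul1l. Qed.

Lemma gmulKr (a b : G) : a * (ginv a * b) = b.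
Proof. by rewrite gmulA gmulVr gmul1l. Qed.
End GroupLemmas.

Section HomLemmas.
Variables (G H : group) (f : G -> H).
Hypothesis hf : is_hom f.

Lemma hom1 : f (gone G) = gone H.
Proof. apply: idem1. by rewrite -hf gmul1l. Qed.

Lemma homV a : f (ginv a) = ginv (f a).
Proof. apply: inv_uniq. by rewrite -hf gmulVl hom1. Qed.

Lemma homcomm a b : f (comm a b) = comm (f a) (f b).
Proof. by rewrite /comm !hf !homV. Qed.
End HomLemmas.

Lemma hom_comp (G H K : group) (f : G -> H) (g : H -> K) :
  is_hom f -> is_hom g -> is_hom (fun a => g (f a)).
Proof. by move=> hf hg a b; rewrite hf hg. Qed.

Definition addG (R : zmodType) : group.
refine (@Defs.Group R (fun a b => a + b)%R 0%R (fun a => - a)%R _ _ _).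
- by move=> a b c; rewrite addrA.
- by move=> a; rewrite add0r.
- by move=> a; rewrite addNr.
Defined.

Inductive trip (R : Type) := Trip of R & R & R.
Definition tp R (t : trip R) := let: Trip a _ _ := t in a.
Definition tq R (t : trip R) := let: Trip _ b _ := t in b.
Definition tr R (t : trip R) := let: Trip _ _ c := t in c.

Definition hmul (R : comPzRingType) (s t : trip R) : trip R :=
  Trip (tp s + tp t)%R (tq s + tq t)%R (tr s + tr t + tp s * tq t)%R.
Definition hinv (R : comPzRingType) (s : trip R) : trip R :=
  Trip (- tp s)%R (- tq s)%R (- tr s + tp s * tq s)%R.

Definition H3 (R : comPzRingType) : group.
refine (@Defs.Group (trip R) (@hmul R) (Trip 0 0 0)%R (@hinv R) _ _ _).
- move=> [a1 a2 a3] [b1 b2 b3] [c1 c2 c3] /=; rewrite /hmul /=; congr Trip; ring.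
- move=> [a1 a2 a3] /=; rewrite /hmul /=; congr Trip; ring.
- move=> [a1 a2 a3] /=; rewrite /hmul /=; congr Trip; ring.
Defined.

Lemma H3comm (R : comPzRingType) (s t : H3 R) :
  comm s t = (Trip 0 0 (tp s * tq t - tp t * tq s))%R.
Proof.
case: s t => [a1 a2 a3] [b1 b2 b3]; rewrite /comm /= /hmul /hinv /=; congr Trip; ring.
Qed.

Lemma tp_hom (R : comPzRingType) : is_hom (G:=H3 R) (H:=addG R) (@tp R).
Proof. by move=> [] ? ? ? [] ? ? ?. Qed.
Lemma tq_hom (R : comPzRingType) : is_hom (G:=H3 R) (H:=addG R) (@tq R).
Proof. by move=> [] ? ? ? [] ? ? ?. Qed.


Lemma gmulVK (G : group) (a b : G) : gmul (gmul a (ginv b)) b = a.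
Proof. by rewrite -gmulA gmulVl gmul1r. Qed.
Lemma gmulKV (G : group) (a b : G) : gmul (gmul a b) (ginv b) = a.
Proof. by rewrite -gmulA gmulVr gmul1r. Qed.

Lemma rinf_family (G : group) (phi : G -> G) (z : nat -> G) : is_hom phi ->
  (forall k l c, z k = gmul (gmul c (z l)) (ginv (phi c)) -> k = l) ->
  reidemeister_infinite phi.
Proof.
move=> hphi hz.
have key : forall s : seq G, exists N, forall k, (N <= k)%N ->
    forall b, List.In b s -> ~ twisted_conj phi (z k) b.
  elim => [|b s [N IH]]; first by exists 0%N.
  case: (classic (exists k0, twisted_conj phi (z k0) b)) => [[k0 [c0 hc0]]|nb].
  - exists (maxn N k0.+1) => k hk b' [<-|inb].
    + move=> [c hc].
      have ekk : k = k0.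
        apply: (hz k k0 (gmul c (ginv c0))).
        rewrite hc hc0 hphi (homV hphi) ginvM ginvK.
        rewrite !gmulA gmulVK.
        congr gmul. by rewrite gmulVK.
      move: hk; rewrite ekk geq_max ltnn andbF //.
    + apply: IH => //; exact: leq_trans (leq_maxl _ _) hk.
  - exists N => k hk b' [<-|inb].
    + by move=> hc; apply: nb; exists k.
    + exact: IH.
move=> s; have [N hN] := key s; exists (z N); exact: hN.
Qed.

Fixpoint gpow (G : group) (g : G) (k : nat) : G :=
  match k with 0 => gone G | S k => gmul g (gpow g k) end.

Lemma hom_gpow (G H : group) (a : G -> H) g k : is_hom a -> a (gpow g k) = gpow (a g) k.
Proof. move=> ha; elim: k => [|k IH] /=; [exact: hom1 | by rewrite ha IH]. Qed.

Lemma gpow_add (R : zmodType) (g : addG R) k : gpow g k = (g *+ k)%R.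
Proof. elim: k => [|k IH] //=; by rewrite IH mulrS. Qed.

Lemma gpow_H3 (R : comPzRingType) (t : R) k :
  gpow (Trip 0 0 t : H3 R)%R k = (Trip 0 0 (t *+ k))%R.
Proof.
elim: k => [|k IH] //=; rewrite IH /hmul /=; congr Trip; rewrite ?addr0 ?mulr0 ?mulrS ?addr0 //.
Qed.
Section Pres.
Variables (n : nat) (e : rel 'I_n) (G : group) (x : 'I_n -> G) (y : 'I_n -> 'I_n -> G).
Hypothesis pres : presents_GGamma e x y.
Hypothesis sg : simple_graph e.

Lemma rel_hom (H : group) (a : G -> H) : is_hom a ->
  GammaRel e (fun i => a (x i)) (fun i j => a (y i j)).
Proof.
move=> ha; case: pres => [[r1 [r2 r3]] _]; split; [|split].
- by move=> i j lij eij; rewrite -homcomm // r1 // hom1.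
- by move=> i j lij eij; rewrite -homcomm // r2.
- by move=> l i j lij eij; rewrite -homcomm // r3 // hom1.
Qed.

Lemma hom_ext (H : group) (a1 a2 : G -> H) : is_hom a1 -> is_hom a2 ->
  (forall i, a1 (x i) = a2 (x i)) -> forall g, a1 g = a2 g.
Proof.
move=> h1 h2 hx g.
case: pres => [[r1 [r2 r3]] U].
have [f0 [hf0 fx fy fu]] := U H _ _ (rel_hom h1).
rewrite (fu a1) // (fu a2) //.
move=> i j lij eij; rewrite -r2 // !homcomm //; by rewrite hx hx.
Qed.

Lemma heis_ex (R : comPzRingType) (P Q : 'I_n -> R) :
  (forall i j, e i j -> P i * Q j = P j * Q i)%R ->
  exists chi : G -> H3 R, is_hom chi /\ forall i, chi (x i) = Trip (P i) (Q i) 0%R.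
Proof.
move=> hPQ.
case: pres => [_ U].
pose xh := fun i => (Trip (P i) (Q i) 0%R : H3 R).
pose yh := fun i j => comm (xh j) (xh i).
have hrel : GammaRel e xh yh.
  split; [|split].
  - move=> i j _ eij; rewrite H3comm /=; congr Trip; rewrite (hPQ _ _ eij); ring.
  - by [].
  - move=> l i j _ _; rewrite /yh !H3comm /=; congr Trip; ring.
have [f0 [hf0 fx _ _]] := U (H3 R) xh yh hrel.
by exists f0; split.
Qed.

Definition heis (R : comPzRingType) (P Q : 'I_n -> R)
  (h : forall i j, e i j -> (P i * Q j = P j * Q i)%R) : G -> H3 R :=
  proj1_sig (constructive_indefinite_description _ (heis_ex h)).

Lemma heis_hom R P Q h : is_hom (@heis R P Q h).
Proof. rewrite /heis; case: constructive_indefinite_description => ? []; done. Qed.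

Lemma heis_x R P Q h i : @heis R P Q h (x i) = Trip (P i) (Q i) 0%R.
Proof. rewrite /heis; case: constructive_indefinite_description => ? []; done. Qed.

Definition delta (i : 'I_n) : 'I_n -> int := fun j => Posz (i == j).

Lemma delta_ok i : forall a b, e a b -> (delta i a * (fun _ => 0%R) b = delta i b * (fun _ => 0%R) a)%R.
Proof. by move=> a b _; rewrite !mulr0. Qed.

Definition f (i : 'I_n) (g : G) : int := tp (heis (delta_ok i) g).

Lemma f_hom i : is_hom (H:=addG int) (f i).
Proof. move=> a b; by rewrite /f heis_hom tp_hom. Qed.

Lemma f_x i j : f i (x j) = Posz (i == j).
Proof. by rewrite /f heis_x. Qed.

Lemma expand (R : comPzRingType) (a : G -> R) : is_hom (H:=addG R) a ->
  forall g, a g = (\sum_j a (x j) * (f j g)%:~R)%R.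
Proof.
move=> ha; apply: (@hom_ext (addG R)) => //.
- move=> g h /=.
  rewrite -big_split /=; apply: eq_bigr => j _.
  by rewrite f_hom /= intrD mulrDr.
- move=> i /=.
  rewrite (bigD1 i) //= f_x eqxx mulr1 big1 ?addr0 // => j /negPf nij.
  by rewrite f_x nij mulr0.
Qed.

Lemma bil (R : comPzRingType) (chi : G -> H3 R) : is_hom chi -> forall g h,
  tr (chi (comm g h)) = (tp (chi g) * tq (chi h) - tp (chi h) * tq (chi g))%R.
Proof. by move=> hc g h; rewrite homcomm // H3comm. Qed.

Lemma edge_bil (R : comPzRingType) (chi : G -> H3 R) : is_hom chi -> forall i j,
  e i j -> (tp (chi (x i)) * tq (chi (x j)) = tp (chi (x j)) * tq (chi (x i)))%R.
Proof.
move=> hc i j eij.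
case: pres => [[r1 _] _].
case: sg => sym irr.
have nij : i != j by apply/eqP => eq; move: (irr i); rewrite {2}eq eij.
have key : forall a b : 'I_n, (a < b)%N -> e a b ->
  (tp (chi (x b)) * tq (chi (x a)) - tp (chi (x a)) * tq (chi (x b)) = 0)%R.
  move=> a b lab eab; rewrite -bil // r1 // hom1 //.
case: (ltngtP i j) => [lij|lji|eq].
- by apply/eqP; rewrite eq_sym -subr_eq0 key.
- by apply/eqP; rewrite -subr_eq0 key // sym.
- by move/eqP: nij; case; apply: val_inj.
Qed.

Lemma tp_expand (R : comPzRingType) (chi : G -> H3 R) : is_hom chi -> forall g,
  tp (chi g) = (\sum_j tp (chi (x j)) * (f j g)%:~R)%R.
Proof. move=> hc; apply: expand => a b; by rewrite hc tp_hom. Qed.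
Lemma tq_expand (R : comPzRingType) (chi : G -> H3 R) : is_hom chi -> forall g,
  tq (chi g) = (\sum_j tq (chi (x j)) * (f j g)%:~R)%R.
Proof. move=> hc; apply: expand => a b; by rewrite hc tq_hom. Qed.


Lemma sum_delta (R : comPzRingType) (k : 'I_n) (c : 'I_n -> R) :
  (\sum_j c j * (Posz (k == j))%:~R = c k)%R.
Proof.
rewrite (bigD1 k) //= eqxx mulr1 big1 ?addr0 // => j /negPf nkj.
by rewrite eq_sym nkj mulr0.
Qed.

Lemma unit_int (a b : int) : (a * b = 1)%R -> a = 1%R \/ a = (-1)%R.
Proof. move=> h.
have : (a <= -2 \/ a = -1 \/ a = 0 \/ a = 1 \/ 2 <= a)%R by lia.
case=> [ha|[ha|[ha|[ha|ha]]]]; try by [left|right].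
- have : (b <= -1 \/ b = 0 \/ 1 <= b)%R by lia. case=> [hb|[hb|hb]]; [nia| by move: h; rewrite hb mulr0 | nia].
- by move: h; rewrite ha mul0r.
- have : (b <= -1 \/ b = 0 \/ 1 <= b)%R by lia. case=> [hb|[hb|hb]]; [nia| by move: h; rewrite hb mulr0 | nia].
Qed.

Lemma pair_ok (k j : 'I_n) : ~~ e k j ->
  forall a b, e a b -> (delta k a * delta j b = delta k b * delta j a)%R.
Proof.
move=> nkj a b eab; case: sg => sym _.
rewrite /delta.
have h1 : ~~ ((k == a) && (j == b)).
  by apply/negP => /andP[/eqP ka /eqP jb]; move: nkj; rewrite ka jb eab.
have h2 : ~~ ((k == b) && (j == a)).
  by apply/negP => /andP[/eqP kb /eqP ja]; move: nkj; rewrite kb ja sym eab.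
move: h1 h2; case: (k == a); case: (j == b); case: (k == b); case: (j == a) => //.
Qed.

Definition psi2 (k j : 'I_n) (h : ~~ e k j) : G -> H3 int := heis (pair_ok h).

Lemma tp_heis R P Q h g : tp (@heis R P Q h g) = (\sum_j P j * (f j g)%:~R)%R.
Proof. by rewrite (tp_expand (heis_hom h)); apply: eq_bigr => j _; rewrite heis_x. Qed.
Lemma tq_heis R P Q h g : tq (@heis R P Q h g) = (\sum_j Q j * (f j g)%:~R)%R.
Proof. by rewrite (tq_expand (heis_hom h)); apply: eq_bigr => j _; rewrite heis_x. Qed.

Lemma sum_delta2 (k : 'I_n) (g : G) : (\sum_j delta k j * (f j g)%:~R)%R = f k g.
Proof.
rewrite (bigD1 k) //= /delta eqxx mul1r big1 ?addr0 ?intz // => j /negPf nkj.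
by rewrite eq_sym nkj mul0r.
Qed.

Lemma tp_psi2 k j h g : tp (@psi2 k j h g) = f k g.
Proof. by rewrite /psi2 tp_heis sum_delta2. Qed.
Lemma tq_psi2 k j h g : tq (@psi2 k j h g) = f j g.
Proof. by rewrite /psi2 tq_heis sum_delta2. Qed.

Lemma f_comm i g h : f i (comm g h) = 0%R.
Proof.
rewrite /comm !(f_hom i) /= !(homV (f_hom i)) /=.
by ring.
Qed.

Section Vertex.
Variables (v w : 'I_n).
Hypothesis vw : v != w.
Hypothesis nvw : ~~ e v w.
Hypothesis adjv : forall j, j != v -> j != w -> e v j.

Lemma KI (R : comPzRingType) (chi : G -> H3 R) : is_hom chi -> forall g,
  tr (chi (comm (x v) g)) = ((f w g)%:~R * tr (chi (comm (x v) (x w))))%R.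
Proof.
move=> hc g.
rewrite !bil // (tq_expand hc g) (tp_expand hc g) mulr_sumr mulr_suml -sumrB.
rewrite (bigD1 w) //= big1 ?addr0; first by ring.
move=> j njw.
case: (eqVneq j v) => [->|njv]; first by ring.
have E := edge_bil hc (adjv njv njw).
rewrite mulrA E; ring.
Qed.

Hypothesis two : forall k, k != v -> exists j1 j2,
  [/\ ~~ e k j1, j1 != k, ~~ e k j2, j2 != k & j1 != j2].

Lemma psi2_hom k j h : is_hom (@psi2 k j h).
Proof. exact: heis_hom. Qed.

Lemma F1 (psi psi' : G -> G) : is_hom psi -> (forall a, psi (psi' a) = a) ->
  forall k, k != v -> f k (psi (x v)) = 0%R.
Proof.
move=> hp inv k nkv; apply/eqP; apply: contraT => hne.
have [j1 [j2 [n1 k1 n2 k2 j12]]] := two nkv.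
have LHS : forall j (h : ~~ e k j) j', j' != k ->
    tr (psi2 h (psi (comm (x v) (psi' (x j'))))) = (f k (psi (x v)) * Posz (j == j'))%R.
  move=> j h j' nj'k.
  rewrite (homcomm hp) inv (bil (psi2_hom h)) !tp_psi2 !tq_psi2 !f_x.
  have -> : (k == j') = false by rewrite eq_sym (negPf nj'k).
  by rewrite mul0r subr0.
have RHS : forall j (h : ~~ e k j) g,
    tr (psi2 h (psi (comm (x v) g))) =
    (f w g * tr (psi2 h (psi (comm (x v) (x w)))))%R.
  move=> j h g; rewrite (KI (hom_comp hp (psi2_hom h))) intz //.
have e11 := LHS j1 n1 j1 k1; rewrite RHS eqxx mulr1 in e11.
have e12 := LHS j1 n1 j2 k2; rewrite RHS (negPf j12) mulr0 in e12.
have e22 := LHS j2 n2 j2 k2; rewrite RHS eqxx mulr1 in e22.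
move/eqP: e12; rewrite mulf_eq0 => /orP[/eqP z2|/eqP z1].
- by move: hne; rewrite -e22 z2 mul0r eqxx.
- by move: hne; rewrite -e11 z1 mulr0 eqxx.
Qed.


Section Auto.
Variables (phi phi' : G -> G).
Hypotheses (hphi : is_hom phi) (hphi' : is_hom phi').
Hypotheses (c1 : forall a, phi (phi' a) = a) (c2 : forall a, phi' (phi a) = a).

Lemma fphi_int i g : f i (phi g) = (\sum_j f i (phi (x j)) * f j g)%R.
Proof.
rewrite (@expand int (fun g => f i (phi g))); last exact: (hom_comp hphi (f_hom i)).
by apply: eq_bigr => j _; rewrite intz.
Qed.

Lemma eps_unit : f v (phi (x v)) = 1%R \/ f v (phi (x v)) = (-1)%R.
Proof.
have h := f_x v v; rewrite eqxx -{1}(c1 (x v)) fphi_int (bigD1 v) //= big1 ?addr0 in h.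
  exact: unit_int h.
by move=> j njv; rewrite (F1 hphi' c2 njv) mulr0.
Qed.

Lemma eps_neq0 : f v (phi (x v)) != 0%R.
Proof. by case: eps_unit => ->. Qed.

Lemma F2 i : i != w -> f w (phi (x i)) = 0%R.
Proof.
move=> niw.
have wv : w != v by rewrite eq_sym.
case: (eqVneq i v) => [->|niv]; first exact: (F1 hphi c1 wv).
have E := edge_bil (hom_comp hphi (psi2_hom nvw)) (adjv niv niw).
rewrite !tp_psi2 !tq_psi2 (F1 hphi c1 wv) mulr0 in E.
by move/eqP: E; rewrite mulf_eq0 (negPf eps_neq0) => /eqP.
Qed.

Lemma d_unit : f w (phi (x w)) = 1%R \/ f w (phi (x w)) = (-1)%R.
Proof.
have h := f_x w w; rewrite eqxx -{1}(c1 (x w)) fphi_int (bigD1 w) //= big1 ?addr0 in h.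
  exact: unit_int h.
by move=> j njw; rewrite (F2 njw) mul0r.
Qed.

Lemma d_neq0 : f w (phi (x w)) != 0%R.
Proof. by case: d_unit => ->. Qed.

Lemma F3 s i : ~~ e s w -> e i w -> f s (phi (x i)) = 0%R.
Proof.
move=> nsw eiw.
have niw : i != w by apply/eqP => iw; case: sg => _ irr; move: (irr w); rewrite -{1}iw eiw.
have E := edge_bil (hom_comp hphi (psi2_hom nsw)) eiw.
rewrite !tp_psi2 !tq_psi2 (F2 niw) mulr0 in E.
by move/eqP: E; rewrite mulf_eq0 (negPf d_neq0) orbF => /eqP.
Qed.

Local Open Scope ring_scope.
Definition M : 'M[rat]_n := \matrix_(i, j) (f i (phi (x j)))%:~R.

Lemma fphi_rat i g : ((f i (phi g))%:~R : rat) = (\sum_j M i j * (f j g)%:~R)%R.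
Proof.
rewrite fphi_int rmorph_sum; apply: eq_bigr => j _.
by rewrite rmorphM /= mxE.
Qed.

Lemma det_col0 (A : 'M[rat]_n) j : (forall i, A i j = 0%R) -> \det A = 0%R.
Proof.
move=> h; apply/eqP; rewrite -det_tr; apply/det0P; exists (delta_mx 0 j).
  apply/eqP => /rowP /(_ j); rewrite !mxE !eqxx /= => /eqP; by rewrite oner_eq0.
rewrite -rowE; apply/rowP => i; rewrite !mxE; exact: h.
Qed.

Lemma det_row0 (A : 'M[rat]_n) i : (forall j, A i j = 0%R) -> \det A = 0%R.
Proof. move=> h; rewrite -det_tr; apply: (det_col0 (j:=i)) => j; rewrite mxE; exact: h. Qed.

Lemma caseA : \det (1%:M - M) = 0%R -> reidemeister_infinite phi.
Proof.
move/eqP/det0P => [r rn0 hr].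
have rM : r *m M = r.
  by move: hr; rewrite mulmxBr mulmx1 => /subr0_eq.
have [j hj] : exists j, r 0 j != 0%R.
  case: (pickP (fun j => r 0 j != 0%R)) => [j hj|h0]; first by exists j.
  move/eqP: rn0; case; apply/rowP => j; rewrite mxE; move: (h0 j) => /negbFE/eqP.
  by have -> : (0 : 'I_1) = ord0 by apply: val_inj.
pose h (g : G) := (\sum_i r 0 i * (f i g)%:~R)%R : rat.
have hh : is_hom (H:=addG rat) h.
  move=> a b /=; rewrite /h -big_split; apply: eq_bigr => i _ /=.
  by rewrite f_hom /= intrD mulrDr.
have hphiinv : forall g, h (phi g) = h g.
  move=> g; rewrite /h.
  under eq_bigr do rewrite fphi_rat mulr_sumr.
  rewrite exchange_big; apply: eq_bigr => k _ /=.
  rewrite -{2}rM mxE mulr_suml; apply: eq_bigr => i _; by rewrite mulrA.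
have hx : h (x j) = r 0 j.
  rewrite /h (bigD1 j) //= f_x eqxx mulr1 big1 ?addr0 // => i /negPf nij.
  by rewrite f_x nij mulr0.
apply: (@rinf_family G phi (fun k => gpow (x j) k)) => // k l c E.
have := congr1 h E; rewrite !hh /= (homV hh) /= hphiinv.
rewrite addrAC subrr add0r !(hom_gpow _ _ hh) !gpow_add hx.
exact: Num.Theory.mulrIn.
Qed.

Lemma caseB : \det (1%:M - M) != 0 -> reidemeister_infinite phi.
Proof.
move=> hdet.
have hwv : w != v by rewrite eq_sym.
have eps : f v (phi (x v)) = -1.
  case: eps_unit => // e1; move/eqP: hdet; case.
  apply: (det_col0 (j:=v)) => i; rewrite !mxE.
  case: (eqVneq i v) => [->|niv]; first by rewrite e1 /= subrr.
  by rewrite (F1 hphi c1 niv) /= subr0.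
have dd : f w (phi (x w)) = -1.
  case: d_unit => // d1; move/eqP: hdet; case.
  apply: (det_row0 (i:=w)) => j; rewrite !mxE.
  case: (eqVneq w j) => [<-|nwj]; first by rewrite d1 /= subrr.
  by rewrite (F2 _) 1?eq_sym //= subr0.
pose inS (s : 'I_n) := ~~ e s w && (s != w).
have vS : inS v by rewrite /inS nvw vw.
pose B : 'M[rat]_n := \matrix_(s, i) (if inS s && inS i then M s i else 0).
have dB : \det (B + 1%:M) = 0.
  apply: (det_col0 (j:=v)) => s; rewrite !mxE vS andbT.
  case: (eqVneq s v) => [->|nsv]; first by rewrite vS eps /=; ring.
  by case: (inS s); rewrite /= ?(F1 hphi c1 nsv) /= addr0.
move/eqP/det0P: dB => [al aln0 hal].
have hA : forall i, \sum_s al 0 s * (B + 1%:M) s i = 0.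
  by move=> i; have := congr1 (fun m : 'M[rat]_(1,n) => m 0 i) hal; rewrite !mxE.
have al_out : forall i, ~~ inS i -> al 0 i = 0.
  move=> i ni; have := hA i.
  rewrite (bigD1 i) //= big1 ?addr0.
    by rewrite !mxE (negPf ni) andbF eqxx add0r mulr1.
  by move=> s nsi; rewrite !mxE (negPf ni) andbF (negPf nsi) addr0 mulr0.
have al_w : al 0 w = 0 by apply: al_out; rewrite /inS eqxx andbF.
have al_eig : forall i, i != w -> \sum_s al 0 s * M s i = - al 0 i.
  move=> i niw; case iS: (inS i).
  - have E : \sum_s al 0 s * (B + 1%:M) s i =
        \sum_s al 0 s * M s i + \sum_s al 0 s * ((s == i)%:R).
      rewrite -big_split; apply: eq_bigr => s _ /=; rewrite !mxE iS andbT -mulrDr.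
      case sS: (inS s); first done.
      by rewrite (al_out s) ?sS // !mul0r.
    have E2 : \sum_s al 0 s * ((s == i)%:R) = al 0 i.
      rewrite (bigD1 i) //= eqxx mulr1 big1 ?addr0 // => s /negPf ->.
      by rewrite mulr0.
    by apply/eqP; rewrite -addr_eq0 -E2 -E hA.
  - rewrite (al_out i) ?iS // oppr0 big1 // => s _.
    case sS: (inS s); last by rewrite (al_out s) ?sS // mul0r.
    have eiw : e i w by move: iS; rewrite /inS niw andbT => /negbFE.
    by move: sS => /andP[nsw _]; rewrite mxE (F3 nsw eiw) mulr0.
have [s0 hs0] : exists s0, al 0 s0 != 0.
  case: (pickP (fun j => al 0 j != 0)) => [j hj|h0]; first by exists j.
  move/eqP: aln0; case; apply/rowP => j; rewrite mxE; move: (h0 j) => /negbFE/eqP.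
  by have -> : (0 : 'I_1) = ord0 by apply: val_inj.
pose Q := fun i : 'I_n => ((w == i) : nat)%:R : rat.
have cond : forall a b, e a b -> al 0 a * Q b = al 0 b * Q a.
  move=> a b eab; case: sg => sym irr; rewrite /Q.
  case: (eqVneq w b) => [wb|nwb]; case: (eqVneq w a) => [wa|nwa] //=.
  - by move: eab; rewrite -wa -wb (negPf (irr w)).
  - by rewrite mulr0 mulr1 (al_out a) // /inS negb_and negbK wb eab.
  - by rewrite mulr0 mulr1 (al_out b) // /inS negb_and negbK wa sym eab.
  - by rewrite !mulr0.
pose rho := heis cond.
have rho_hom : is_hom rho := heis_hom cond.
have rho_x : forall i, rho (x i) = Trip (al 0 i) (Q i) 0 := heis_x cond.
have tq_rho : forall g, tq (rho g) = (f w g)%:~R.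
  move=> g; rewrite tq_heis /Q (bigD1 w) //= eqxx mul1r big1 ?addr0 // => j nj.
  by rewrite eq_sym (negPf nj) mul0r.
pose eta := \sum_s al 0 s * M s w.
pose cc := fun i : 'I_n => tr (rho (phi (x i))) + eta * Q i / 2%:R.
pose hh := fun g => \sum_j cc j * (f j g)%:~R.
have hh_hom : is_hom (H:=addG rat) hh.
  move=> a b /=; rewrite /hh -big_split; apply: eq_bigr => i _ /=.
  by rewrite f_hom /= intrD mulrDr.
pose Th := fun g => (Trip (- tp (rho g) + eta * tq (rho g)) (- tq (rho g))
                 (tr (rho g) - eta * (tq (rho g))^+2 / 2%:R + hh g) : H3 rat).
have Th_hom : is_hom Th.
  move=> a b; rewrite /Th rho_hom hh_hom /=.
  case: (rho a) => p1 q1 r1; case: (rho b) => p2 q2 r2 /=.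
  rewrite /hmul /=; congr Trip; field; done.
have Th_x : forall i, Th (x i) = rho (phi (x i)).
  move=> i; rewrite /Th rho_x /=.
  have hhx : hh (x i) = cc i.
    rewrite /hh (bigD1 i) //= f_x eqxx mulr1 big1 ?addr0 // => j /negPf nji.
    by rewrite f_x nji mulr0.
  have tpx : tp (rho (phi (x i))) = - al 0 i + eta * Q i.
    rewrite tp_heis.
    have -> : \sum_j al 0 j * (f j (phi (x i)))%:~R = \sum_j al 0 j * M j i by apply: eq_bigr => j _; rewrite mxE.
    rewrite /Q; case: (eqVneq w i) => [<-|nwi] /=.
      by rewrite al_w oppr0 add0r mulr1.
    by rewrite mulr0 addr0 al_eig // eq_sym.
  have tqx : tq (rho (phi (x i))) = - Q i.
    rewrite tq_rho /Q; case: (eqVneq w i) => [<-|nwi] /=; first by rewrite dd.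
    by rewrite F2 1?eq_sym // oppr0.
  rewrite hhx /cc; move: tpx tqx; case: (rho (phi (x i))) => p q r /= -> ->.
  congr Trip; rewrite /Q; case: (w == i) => /=; field; done.
have ThE : forall g, Th g = rho (phi g).
  move=> g; exact: (@hom_ext (H3 rat) Th (fun g => rho (phi g)) Th_hom (hom_comp hphi rho_hom) Th_x g).
have fix0 : forall c, (forall j, f j c = 0) -> rho (phi c) = rho c.
  move=> c hc; rewrite -ThE /Th.
  have tp0 : tp (rho c) = 0.
    by rewrite tp_heis big1 // => j _; rewrite hc mulr0.
  have tq0 : tq (rho c) = 0 by rewrite tq_rho hc.
  have hh0 : hh c = 0 by rewrite /hh big1 // => j _; rewrite hc mulr0.
  rewrite hh0; move: tp0 tq0; case: (rho c) => p q r /= -> ->.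
  congr Trip; rewrite ?oppr0 ?mulr0 ?addr0 //.
pose zz := comm (x s0) (x w).
have rho_zz : rho zz = Trip 0 0 (al 0 s0).
  rewrite /zz (homcomm rho_hom) H3comm !rho_x /= al_w /Q eqxx mul0r subr0 mulr1 //.
have f_z : forall j k, f j (gpow zz k) = 0.
  move=> j k; rewrite (hom_gpow _ _ (f_hom j)) gpow_add /zz f_comm mul0rn //.
apply: (@rinf_family G phi (fun k => gpow zz k)) => // k l c E.
have fc0 : forall j, f j c = 0.
  have hX : forall j, f j c = f j (phi c).
    move=> j; have := congr1 (f j) E.
    rewrite !f_hom /= (homV (f_hom j)) !f_z addr0 => /= /esym /eqP.
    by rewrite subr_eq0 => /eqP.
  pose X : 'cV[rat]_n := \col_j (f j c)%:~R.
  have AX : (1%:M - M) *m X = 0.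
    apply/colP => i; rewrite mulmxBl mul1mx !mxE.
    rewrite hX fphi_rat; apply/eqP; rewrite subr_eq0; apply/eqP; apply: eq_bigr => j _; by rewrite !mxE.
  have X0 : X = 0.
    have hu : (1%:M - M) \in unitmx by rewrite unitmxE unitfE.
    by rewrite -(mulKmx hu X) AX mulmx0.
  move=> j; have := congr1 (fun m : 'cV[rat]_n => m j 0) X0; rewrite !mxE => /eqP.
  by rewrite intr_eq0 => /eqP.
have := congr1 rho E; rewrite !rho_hom (homV rho_hom) fix0 //.
rewrite !(hom_gpow _ _ rho_hom) rho_zz !gpow_H3.
case: (rho c) => p q r /=; rewrite /hmul /hinv /= => [[]] _ _ h.
apply: (Num.Theory.mulrIn hs0); rewrite h; ring.
Qed.
End Auto.

End Vertex.

End Pres.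
Lemma nonnb_card n (e : rel 'I_n) (k : 'I_n) : simple_graph e ->
  #|[set j | ~~ e k j & j != k]| + deg e k + 1 = n.
Proof.
move=> [sym irr].
have := cardsC [set j | e k j]; rewrite card_ord (cardsD1 k (~: [set j | e k j])).
have kin : k \in ~: [set j | e k j] by rewrite in_setC in_set; exact: irr.
rewrite kin.
have -> : ~: [set j | e k j] :\ k = [set j | ~~ e k j & j != k].
  by apply/setP => j; rewrite !inE andbC.
rewrite /deg /= => h; lia.
Qed.

Theorem theorem4p4 (n : nat) (e : rel 'I_n) (G : group)
    (x : 'I_n -> G) (y : 'I_n -> 'I_n -> G) :
  simple_graph e ->
  2 <= n ->
  (forall i, deg e i <= n - 2) ->
  (exists i, deg e i = n - 2 /\ forall j, j != i -> deg e j != n - 2) ->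
  presents_GGamma e x y ->
  R_infty_property G.
Proof.
move=> sg n2 hdeg [v [hv huniq]] pres phi [hphi [phi' c2 c1]].
have hphi' : is_hom phi'.
  move=> a b; rewrite -{1}(c1 a) -{1}(c1 b) -hphi; exact: c2.
have cv := nonnb_card v sg; rewrite hv in cv.
have /cards1P [w hw] : #|[set j | ~~ e v j & j != v]| == 1 by apply/eqP; lia.
have wS : w \in [set j | ~~ e v j & j != v] by rewrite hw set11.
move: (wS); rewrite inE => /andP [nvw wv].
have vw : v != w by rewrite eq_sym.
have adjv : forall j, j != v -> j != w -> e v j.
  move=> j njv njw; apply: contraT => nvj.
  have : j \in [set j | ~~ e v j & j != v] by rewrite inE nvj njv.
  by rewrite hw inE (negPf njw).
have two : forall k, k != v -> exists j1 j2,
    [/\ ~~ e k j1, j1 != k, ~~ e k j2, j2 != k & j1 != j2].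
  move=> k nkv.
  have ck := nonnb_card k sg.
  have dk : deg e k < n - 2 by rewrite ltn_neqAle huniq // hdeg.
  have : 1 < #|[set j | ~~ e k j & j != k]| by lia.
  move/card_gt1P => [j1 [j2 []]]; rewrite !inE => /andP[a1 b1] /andP[a2 b2] j12.
  by exists j1, j2.
case: (eqVneq ((\det (1%:M - M pres phi))%R) 0%R) => hdet.
- exact: (caseA hphi hdet).
- exact: (caseB sg vw nvw adjv two hphi hphi' c1 c2 hdet).
Qed.
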